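(* Let $\gamma:[0,1]\to[0,1]^2$ be a continuous curve with $\gamma(0)=(0,0)$, $\gamma(1)=(1,1)$, and $\pi_2\circ\gamma\in\mathcal U$. Then for each $n\in\mathbb{N}$ there exist points $A_1,\ldots,A_{n+1}$ on $\gamma$ such that, setting $A_0=(0,0)$, $A_{n+2}=(1,1)$ and $A_{-1}=A_{n+1}-(1,1)$, $$\pi_2(\overrightarrow{A_iA_{i+1}})=\pi_1(\overrightarrow{A_{i-1}A_i}),\qquad i=0,\ldots,n+1.$$ Moreover, if $\gamma(t)\in\Delta$ for all $t\in(0,1)$, then the points $A_i$ can be chosen to be distinct.
   Context: $\pi_1(a,b)=a$ and $\pi_2(a,b)=b$ are the coordinate projections; $\overrightarrow{AB}=B-A$. $\Delta=\{(a,b)\in(0,1)^2: a>b\}$. A function $f:[0,1]\to\mathbb{R}$ is called piecewise monotone if there is a partition of $[0,1]$ into finitely many subintervals on each of which $f$ is strictly increasing or strictly decreasing. $\mathcal U$ denotes the set of piecewise monotone continuous functions $f:[0,1]\to[0,1]$ with the property that, for every $c\in[0,1]$, the set $f^{-1}(c)$ does not contain both a local maximum point and a local minimum point of $f$. *)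

(* Defs.v *)
From Stdlib Require Import Reals Lra Lia.
Open Scope R_scope.

Definition in01 (x : R) : Prop := 0 <= x <= 1.

Definition cont01 (f : R -> R) : Prop :=
  forall x, in01 x -> forall eps, 0 < eps ->
    exists delta, 0 < delta /\
      forall y, in01 y -> Rabs (y - x) < delta -> Rabs (f y - f x) < eps.

Definition strict_incr_on (f : R -> R) (a b : R) : Prop :=
  forall x y, a <= x -> x < y -> y <= b -> f x < f y.
Definition strict_decr_on (f : R -> R) (a b : R) : Prop :=
  forall x y, a <= x -> x < y -> y <= b -> f y < f x.

Definition piecewise_monotone (f : R -> R) : Prop :=
  exists (k : nat) (x : nat -> R),
    (0 < k)%nat /\ x 0%nat = 0 /\ x k = 1 /\
    (forall j, (j < k)%nat -> x j < x (S j)) /\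
    (forall j, (j < k)%nat ->
       strict_incr_on f (x j) (x (S j)) \/ strict_decr_on f (x j) (x (S j))).

Definition local_max_point (f : R -> R) (x : R) : Prop :=
  in01 x /\ exists eps, 0 < eps /\
    forall y, in01 y -> Rabs (y - x) < eps -> f y <= f x.
Definition local_min_point (f : R -> R) (x : R) : Prop :=
  in01 x /\ exists eps, 0 < eps /\
    forall y, in01 y -> Rabs (y - x) < eps -> f x <= f y.

Definition classU (f : R -> R) : Prop :=
  piecewise_monotone f /\ cont01 f /\ (forall x, in01 x -> in01 (f x)) /\
  forall c : R, ~ ((exists x, in01 x /\ f x = c /\ local_max_point f x) /\
                   (exists y, in01 y /\ f y = c /\ local_min_point f y)).

Definition pi1 (p : R * R) : R := fst p.
Definition pi2 (p : R * R) : R := snd p.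

Definition DeltaSet (p : R * R) : Prop :=
  0 < pi1 p < 1 /\ 0 < pi2 p < 1 /\ pi1 p > pi2 p.

Definition curve01 (g : R -> R * R) : Prop :=
  cont01 (fun t => pi1 (g t)) /\ cont01 (fun t => pi2 (g t)) /\
  forall t, in01 t -> in01 (pi1 (g t)) /\ in01 (pi2 (g t)).

Definition on_curve (g : R -> R * R) (p : R * R) : Prop :=
  exists t, in01 t /\ g t = p.

Definition prev_pt (A : nat -> R * R) (n i : nat) : R * R :=
  match i with
  | O => (pi1 (A (S n)) - 1, pi2 (A (S n)) - 1)
  | S j => A j
  end.

Definition good_points (g : R -> R * R) (n : nat) (A : nat -> R * R) : Prop :=
  A 0%nat = (0, 0) /\ A (S (S n)) = (1, 1) /\
  (forall i, (1 <= i <= S n)%nat -> on_curve g (A i)) /\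
  (forall i, (i <= S n)%nat ->
     pi2 (A (S i)) - pi2 (A i) = pi1 (A i) - pi1 (prev_pt A n i)).

(* Main.v *)
Require Import Defs.
From Stdlib Require Import Reals Lra Lia ClassicalEpsilon Classical Bool.
Open Scope R_scope.

Definition ind (P : Prop) : R := if excluded_middle_informative P then 1 else 0.
Lemma ind_true (P : Prop) : P -> ind P = 1.
Proof. intros H; unfold ind; destruct excluded_middle_informative; tauto. Qed.
Lemma ind_false (P : Prop) : ~ P -> ind P = 0.
Proof. intros H; unfold ind; destruct excluded_middle_informative; tauto. Qed.
Lemma ind_iff (P Q : Prop) : (P <-> Q) -> ind P = ind Q.
Proof. intros H; unfold ind; do 2 destruct excluded_middle_informative; tauto. Qed.

Definition clamp t := Rmax 0 (Rmin 1 t).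
Lemma clamp_in01 t : in01 (clamp t).
Proof. unfold in01, clamp, Rmax, Rmin; repeat destruct Rle_dec; lra. Qed.
Lemma clamp_id t : in01 t -> clamp t = t.
Proof. unfold in01, clamp, Rmax, Rmin; intros; repeat destruct Rle_dec; lra. Qed.
Lemma clamp_lip x y : Rabs (clamp y - clamp x) <= Rabs (y - x).
Proof.
  unfold clamp, Rmax, Rmin; repeat destruct Rle_dec; unfold Rabs;
  repeat destruct Rcase_abs; lra.
Qed.

Lemma cont01_clamp f : cont01 f -> continuity (fun t => f (clamp t)).
Proof.
  intros H x. unfold continuity_pt, continue_in, limit1_in, limit_in. simpl.
  intros eps Heps. destruct (H (clamp x) (clamp_in01 x) eps Heps) as [d [Hd Hf]].
  exists d. split; auto. intros y [_ Hy]. unfold R_dist in *. apply Hf.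
  apply clamp_in01. eapply Rle_lt_trans; [apply clamp_lip | exact Hy].
Qed.

Lemma IVT_on f : cont01 f -> forall a b, 0 <= a -> a <= b -> b <= 1 ->
  forall v, f a <= v <= f b -> exists t, a <= t <= b /\ f t = v.
Proof.
  intros Hf a b Ha Hab Hb v [H1 H2].
  destruct (Req_dec v (f a)) as [E|E]. { exists a; split; [lra|auto]. }
  destruct (Req_dec v (f b)) as [E'|E']. { exists b; split; [lra|auto]. }
  assert (Hlt : a < b). { destruct (Req_dec a b); [subst; lra|lra]. }
  assert (Hc : continuity (fun t => f (clamp t) - v)).
  { apply continuity_minus; [apply cont01_clamp; auto | apply continuity_const; intros ? ?; auto]. }
  destruct (IVT _ a b Hc Hlt) as [z [Hz Ez]].
  - rewrite clamp_id; [lra | unfold in01; lra].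
  - rewrite clamp_id; [lra | unfold in01; lra].
  - exists z; split; auto. rewrite clamp_id in Ez; [lra | unfold in01; lra].
Qed.

Lemma cont01_opp f : cont01 f -> cont01 (fun t => - f t).
Proof.
  intros H x Hx eps He. destruct (H x Hx eps He) as [d [Hd Hf]].
  exists d; split; auto. intros y Hy Hyx.
  replace (- f y - - f x) with (- (f y - f x)) by ring. rewrite Rabs_Ropp; auto.
Qed.

Lemma incr_le f a b : strict_incr_on f a b -> forall t, a <= t <= b -> f a <= f t <= f b.
Proof.
  intros H t [H1 H2]. split.
  - destruct (Req_dec a t); [subst; lra|]. left; apply H; lra.
  - destruct (Req_dec t b); [subst; lra|]. left; apply H; lra.
Qed.

Lemma incr_inj f a b : strict_incr_on f a b -> forall t1 t2, a <= t1 <= b -> a <= t2 <= b ->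
  f t1 = f t2 -> t1 = t2.
Proof.
  intros H t1 t2 H1 H2 E. destruct (Rtotal_order t1 t2) as [L|[L|L]]; auto.
  - pose proof (H t1 t2 ltac:(lra) L ltac:(lra)); lra.
  - pose proof (H t2 t1 ltac:(lra) L ltac:(lra)); lra.
Qed.

Lemma inv_cont f a b (Hinc : strict_incr_on f a b) t0 (Ht0 : a <= t0 <= b) e (He : 0 < e) :
  exists eta, 0 < eta /\ forall t, a <= t <= b -> Rabs (f t - f t0) < eta -> Rabs (t - t0) < e.
Proof.
  assert (Hup : exists h, 0 < h /\ forall t, a <= t <= b -> t0 + e <= t -> h <= f t - f t0).
  { destruct (Rlt_or_le t0 b) as [Hb|Hb].
    - set (u := Rmin (t0 + e/2) b).
      assert (Hu : t0 < u /\ u <= b /\ u <= t0 + e/2).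
      { unfold u, Rmin; destruct Rle_dec; lra. }
      exists (f u - f t0). split.
      + pose proof (Hinc t0 u ltac:(lra) ltac:(lra) ltac:(lra)); lra.
      + intros t Ht Ht'. pose proof (Hinc u t ltac:(lra) ltac:(lra) ltac:(lra)); lra.
    - exists 1. split; [lra|]. intros t Ht Ht'. lra. }
  assert (Hdn : exists h, 0 < h /\ forall t, a <= t <= b -> t <= t0 - e -> h <= f t0 - f t).
  { destruct (Rlt_or_le a t0) as [Ha|Ha].
    - set (u := Rmax (t0 - e/2) a).
      assert (Hu : u < t0 /\ a <= u /\ t0 - e/2 <= u).
      { unfold u, Rmax; destruct Rle_dec; lra. }
      exists (f t0 - f u). split.
      + pose proof (Hinc u t0 ltac:(lra) ltac:(lra) ltac:(lra)); lra.
      + intros t Ht Ht'. pose proof (Hinc t u ltac:(lra) ltac:(lra) ltac:(lra)); lra.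
    - exists 1. split; [lra|]. intros t Ht Ht'. lra. }
  destruct Hup as [h1 [Hh1 Hu]]. destruct Hdn as [h2 [Hh2 Hd]].
  exists (Rmin h1 h2). split; [apply Rmin_glb_lt; auto|].
  intros t Ht Hft. pose proof (Rmin_l h1 h2). pose proof (Rmin_r h1 h2).
  destruct (Rlt_or_le (Rabs (t - t0)) e) as [|Hge]; auto. exfalso.
  destruct (Rle_or_lt (t0 + e) t) as [H1|H1].
  - pose proof (Hu t Ht H1). revert Hft; unfold Rabs; destruct Rcase_abs; intros; lra.
  - destruct (Rle_or_lt t (t0 - e)) as [H2|H2].
    + pose proof (Hd t Ht H2). revert Hft; unfold Rabs; destruct Rcase_abs; intros; lra.
    + revert Hge; unfold Rabs; destruct Rcase_abs; intros; lra.
Qed.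

Lemma core (f : R -> R) a b (Hab : a < b) (Hinc : strict_incr_on f a b)
 (Hivt : forall w, f a <= w <= f b -> exists t, a <= t <= b /\ f t = w)
 (P : R -> R -> Prop) (Adm : R -> R -> Prop) (c v : R)
 (LS : forall t0, a <= t0 <= b -> f t0 = v -> exists e, 0 < e /\
    forall c' v' t', Adm c' v' -> Rabs (c' - c) < e -> Rabs (t' - t0) < e ->
      a <= t' <= b -> f t' = v' -> (P c' t' <-> P c t0)) :
 exists d, 0 < d /\ forall c' v', Adm c' v' -> Rabs (c' - c) < d -> Rabs (v' - v) < d ->
  ind (exists t, a <= t <= b /\ f t = v /\ P c t) - ind (exists t, a <= t <= b /\ f t = v' /\ P c' t)
  = ind (f a = v /\ P c a /\ v' < v) + ind (f b = v /\ P c b /\ v < v').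
Proof.
  pose proof (incr_le f a b Hinc) as Hle.
  pose proof (incr_inj f a b Hinc) as Hinj.
  assert (Hfab : f a < f b) by (apply Hinc; lra).
  assert (Babs : forall c0 w, (w < f a \/ f b < w) ->
     ~ (exists t, a <= t <= b /\ f t = w /\ P c0 t)).
  { intros c0 w Hw [t [Ht [Ft _]]]. pose proof (Hle t Ht). lra. }
  assert (Buniq : forall c0 t0, a <= t0 <= b ->
     ((exists t, a <= t <= b /\ f t = f t0 /\ P c0 t) <-> P c0 t0)).
  { intros c0 t0 Ht0; split.
    - intros [t [Ht [Ft Pt]]]. rewrite <- (Hinj t t0); auto.
    - intros; exists t0; auto. }
  destruct (Rlt_or_le v (f a)) as [Hva|Hva].
  { exists (f a - v). split; [lra|]. intros c' v' _ _ Hv'.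
    assert (v' < f a) by (revert Hv'; unfold Rabs; destruct Rcase_abs; intros; lra).
    rewrite (ind_false (exists t, _ /\ f t = v /\ _)) by (apply Babs; lra).
    rewrite (ind_false (exists t, _ /\ f t = v' /\ _)) by (apply Babs; lra).
    rewrite !ind_false by lra. ring. }
  destruct (Rlt_or_le (f b) v) as [Hvb|Hvb].
  { exists (v - f b). split; [lra|]. intros c' v' _ _ Hv'.
    assert (f b < v') by (revert Hv'; unfold Rabs; destruct Rcase_abs; intros; lra).
    rewrite (ind_false (exists t, _ /\ f t = v /\ _)) by (apply Babs; lra).
    rewrite (ind_false (exists t, _ /\ f t = v' /\ _)) by (apply Babs; lra).
    rewrite !ind_false by lra. ring. }
  destruct (Hivt v (conj Hva Hvb)) as [t0 [Ht0 Ft0]].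
  destruct (LS t0 Ht0 Ft0) as [e [He HLS]].
  destruct (inv_cont f a b Hinc t0 Ht0 e He) as [eta [Heta Hinv]].
  subst v.
  assert (Step : forall c' v', Adm c' v' -> Rabs (c' - c) < e -> Rabs (v' - f t0) < eta ->
     f a <= v' <= f b ->
     ((exists t, a <= t <= b /\ f t = v' /\ P c' t) <-> P c t0)).
  { intros c' v' Ha Hc Hv Hr. destruct (Hivt v' Hr) as [t' [Ht' Ft']].
    subst v'. rewrite (Buniq c' t' Ht').
    apply (HLS c' (f t') t' Ha Hc); auto. }
  destruct (Req_dec (f t0) (f a)) as [Ea|Ea].
  { assert (t0 = a) by (apply Hinj; lra). subst t0.
    exists (Rmin e (Rmin eta (f b - f a))). split.
    { repeat apply Rmin_glb_lt; lra. }
    intros c' v' Ha Hc Hv.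
    pose proof (Rmin_l e (Rmin eta (f b - f a))).
    pose proof (Rmin_r e (Rmin eta (f b - f a))).
    pose proof (Rmin_l eta (f b - f a)). pose proof (Rmin_r eta (f b - f a)).
    assert (Hv2 : f a - (f b - f a) < v' < f b)
      by (revert Hv; unfold Rabs; destruct Rcase_abs; intros; lra).
    rewrite (ind_false (f b = f a /\ _)) by lra.
    rewrite (ind_iff (exists t, _ /\ f t = f a /\ _) (P c a)) by (apply Buniq; lra).
    destruct (Rlt_or_le v' (f a)) as [Hl|Hl].
    - rewrite (ind_false (exists t, _ /\ f t = v' /\ _)) by (apply Babs; lra).
      rewrite (ind_iff (f a = f a /\ P c a /\ v' < f a) (P c a)) by tauto. ring.
    - rewrite (ind_iff (exists t, _ /\ f t = v' /\ _) (P c a)).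
      + rewrite (ind_false (f a = f a /\ _ /\ v' < f a)) by lra. ring.
      + apply Step; auto; lra. }
  destruct (Req_dec (f t0) (f b)) as [Eb|Eb].
  { assert (t0 = b) by (apply Hinj; lra). subst t0.
    exists (Rmin e (Rmin eta (f b - f a))). split.
    { repeat apply Rmin_glb_lt; lra. }
    intros c' v' Ha Hc Hv.
    pose proof (Rmin_l e (Rmin eta (f b - f a))).
    pose proof (Rmin_r e (Rmin eta (f b - f a))).
    pose proof (Rmin_l eta (f b - f a)). pose proof (Rmin_r eta (f b - f a)).
    assert (Hv2 : f a < v' < f b + (f b - f a))
      by (revert Hv; unfold Rabs; destruct Rcase_abs; intros; lra).
    rewrite (ind_false (f a = f b /\ _)) by lra.
    rewrite (ind_iff (exists t, _ /\ f t = f b /\ _) (P c b)) by (apply Buniq; lra).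
    destruct (Rlt_or_le (f b) v') as [Hl|Hl].
    - rewrite (ind_false (exists t, _ /\ f t = v' /\ _)) by (apply Babs; lra).
      rewrite (ind_iff (f b = f b /\ P c b /\ f b < v') (P c b)) by tauto. ring.
    - rewrite (ind_iff (exists t, _ /\ f t = v' /\ _) (P c b)).
      + rewrite (ind_false (f b = f b /\ _ /\ f b < v')) by lra. ring.
      + apply Step; auto; lra. }
  exists (Rmin e (Rmin eta (Rmin (f t0 - f a) (f b - f t0)))). split.
  { repeat apply Rmin_glb_lt; lra. }
  intros c' v' Ha Hc Hv.
  pose proof (Rmin_l e (Rmin eta (Rmin (f t0 - f a) (f b - f t0)))).
  pose proof (Rmin_r e (Rmin eta (Rmin (f t0 - f a) (f b - f t0)))).
  pose proof (Rmin_l eta (Rmin (f t0 - f a) (f b - f t0))).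
  pose proof (Rmin_r eta (Rmin (f t0 - f a) (f b - f t0))).
  pose proof (Rmin_l (f t0 - f a) (f b - f t0)).
  pose proof (Rmin_r (f t0 - f a) (f b - f t0)).
  assert (Hv2 : f a < v' < f b)
    by (revert Hv; unfold Rabs; destruct Rcase_abs; intros; lra).
  rewrite (ind_false (f a = f t0 /\ _)) by lra.
  rewrite (ind_false (f b = f t0 /\ _)) by lra.
  rewrite (ind_iff (exists t, _ /\ f t = f t0 /\ _) (P c t0)) by (apply Buniq; lra).
  rewrite (ind_iff (exists t, _ /\ f t = v' /\ _) (P c t0)).
  - ring.
  - apply Step; auto; lra.
Qed.

Lemma core_decr (f : R -> R) a b (Hab : a < b) (Hdec : strict_decr_on f a b)
 (Hivt : forall w, f b <= w <= f a -> exists t, a <= t <= b /\ f t = w)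
 (P : R -> R -> Prop) (Adm : R -> R -> Prop) (c v : R)
 (LS : forall t0, a <= t0 <= b -> f t0 = v -> exists e, 0 < e /\
    forall c' v' t', Adm c' v' -> Rabs (c' - c) < e -> Rabs (t' - t0) < e ->
      a <= t' <= b -> f t' = v' -> (P c' t' <-> P c t0)) :
 exists d, 0 < d /\ forall c' v', Adm c' v' -> Rabs (c' - c) < d -> Rabs (v' - v) < d ->
  ind (exists t, a <= t <= b /\ f t = v /\ P c t) - ind (exists t, a <= t <= b /\ f t = v' /\ P c' t)
  = ind (f a = v /\ P c a /\ v < v') + ind (f b = v /\ P c b /\ v' < v).
Proof.
  destruct (core (fun t => - f t) a b Hab) with (P := P)
     (Adm := fun c' w => Adm c' (- w)) (c := c) (v := - v) as [d [Hd H]].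
  - intros x y Hx Hxy Hy. pose proof (Hdec x y Hx Hxy Hy). lra.
  - intros w Hw. destruct (Hivt (- w)) as [t [Ht Ft]]; [lra|]. exists t; split; auto; lra.
  - intros t0 Ht0 Ft0. destruct (LS t0 Ht0 ltac:(lra)) as [e [He HL]].
    exists e; split; auto. intros c' v' t' Ha Hc Ht Ht' Ft'. apply (HL c' (- v')); auto; lra.
  - exists d; split; auto. intros c' v' Ha Hc Hv.
    specialize (H c' (- v')). rewrite Ropp_involutive in H.
    specialize (H Ha Hc).
    replace (- v' - - v) with (- (v' - v)) in H by ring. rewrite Rabs_Ropp in H.
    specialize (H Hv).
    assert (E1 : forall c0 w, (exists t, a <= t <= b /\ - f t = - w /\ P c0 t) <->
                           (exists t, a <= t <= b /\ f t = w /\ P c0 t)).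
    { intros c0 w; split; intros [t [Ht [Ft Pt]]]; exists t; repeat split; auto; lra. }
    rewrite (ind_iff _ _ (E1 c v)) in H. rewrite (ind_iff _ _ (E1 c' v')) in H.
    rewrite H. f_equal; apply ind_iff; split; intros [A1 [A2 A3]]; repeat split; auto; lra.
Qed.

Fixpoint altsum (h : nat -> R) (k : nat) : R :=
  match k with O => 0 | S k' => altsum h k' + (-1)^k' * h k' end.

Lemma altsum_tele h k : altsum (fun j => h j + h (S j)) k = h O - (-1)^k * h k.
Proof. induction k; simpl. - ring. - rewrite IHk. ring. Qed.

Lemma altsum_ext h1 h2 k : (forall j, (j < k)%nat -> h1 j = h2 j) -> altsum h1 k = altsum h2 k.
Proof. induction k; intros H; simpl; auto. rewrite IHk by (intros; apply H; lia). rewrite H by lia. auto. Qed.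

Lemma altsum_minus h1 h2 k : altsum h1 k - altsum h2 k = altsum (fun j => h1 j - h2 j) k.
Proof. induction k; simpl. - ring. - rewrite <- IHk. ring. Qed.

Definition dirp (f : R -> R) (a b : R) (e : bool) : Prop :=
  if e then strict_incr_on f a b else strict_decr_on f a b.

Definition altpart f a b k (xs : nat -> R) d : Prop :=
  (0 < k)%nat /\ xs O = a /\ xs k = b /\ (forall j, (j < k)%nat -> xs j < xs (S j)) /\
  (forall j, (j < k)%nat -> dirp f (xs j) (xs (S j)) (Bool.eqb d (Nat.even j))).

Lemma dirp_union f a b c e : a <= b -> b <= c -> dirp f a b e -> dirp f b c e -> dirp f a c e.
Proof.
  destruct e; simpl; intros Hab Hbc H1 H2 x y Hx Hxy Hy.
  - destruct (Rle_or_lt y b). { apply H1; lra. }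
    destruct (Rle_or_lt b x). { apply H2; lra. }
    pose proof (H1 x b ltac:(lra) ltac:(lra) ltac:(lra)).
    pose proof (H2 b y ltac:(lra) ltac:(lra) ltac:(lra)). lra.
  - destruct (Rle_or_lt y b). { apply H1; lra. }
    destruct (Rle_or_lt b x). { apply H2; lra. }
    pose proof (H1 x b ltac:(lra) ltac:(lra) ltac:(lra)).
    pose proof (H2 b y ltac:(lra) ltac:(lra) ltac:(lra)). lra.
Qed.

Lemma merge f k (x : nat -> R) : (forall j, (j < k)%nat -> x j < x (S j)) ->
  (forall j, (j < k)%nat -> strict_incr_on f (x j) (x (S j)) \/ strict_decr_on f (x j) (x (S j))) ->
  forall m, (1 <= m <= k)%nat -> exists k' xs d, altpart f (x O) (x m) k' xs d.
Proof.
  intros Hx Hd m. induction m as [|m IH]; intros Hm; [lia|].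
  assert (He : exists e, dirp f (x m) (x (S m)) e).
  { destruct (Hd m ltac:(lia)); [exists true|exists false]; simpl; auto. }
  destruct He as [e He].
  destruct (Nat.eq_dec m O) as [E|E].
  { subst m. exists 1%nat, x, e. unfold altpart. repeat split; auto; try lia.
    - intros j Hj. apply Hx; lia.
    - intros j Hj. assert (j = O) by lia. subst j. simpl. destruct e; simpl; auto. }
  destruct (IH ltac:(lia)) as [k' [ys [d [Hk [H0 [Hk' [Hinc Hdir]]]]]]].
  destruct (Bool.eqb e (Bool.eqb d (Nat.even (pred k')))) eqn:Ee.
  -
    apply eqb_prop in Ee.
    exists k', (fun i => if Nat.eqb i k' then x (S m) else ys i), d.
    unfold altpart. repeat split; auto.
    + destruct k' as [|k0]; [lia|]. simpl. auto.
    + rewrite Nat.eqb_refl; auto.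
    + intros j Hj. destruct (Nat.eqb j k') eqn:Q1; [apply Nat.eqb_eq in Q1; lia|].
      destruct (Nat.eqb (S j) k') eqn:Q2.
      * apply Nat.eqb_eq in Q2. pose proof (Hinc j Hj). pose proof (Hx m ltac:(lia)).
        rewrite Q2 in *. lra.
      * apply Hinc; auto.
    + intros j Hj. destruct (Nat.eqb j k') eqn:Q1; [apply Nat.eqb_eq in Q1; lia|].
      destruct (Nat.eqb (S j) k') eqn:Q2.
      * apply Nat.eqb_eq in Q2. assert (j = pred k') by lia. subst j.
        apply dirp_union with (b := x m).
        -- pose proof (Hinc (pred k') Hj). rewrite Q2 in *. lra.
        -- pose proof (Hx m ltac:(lia)); lra.
        -- replace (x m) with (ys (S (pred k'))) by (rewrite Q2; auto). apply Hdir; lia.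
        -- rewrite <- Ee. auto.
      * apply Hdir; auto.
  -
    exists (S k'), (fun i => if Nat.eqb i (S k') then x (S m) else ys i), d.
    unfold altpart. repeat split; auto; try lia.
    + rewrite Nat.eqb_refl; auto.
    + intros j Hj. destruct (Nat.eqb j (S k')) eqn:Q1; [apply Nat.eqb_eq in Q1; lia|].
      destruct (Nat.eqb (S j) (S k')) eqn:Q2.
      * apply Nat.eqb_eq in Q2. assert (j = k') by lia. subst j.
        rewrite Hk'. apply Hx; lia.
      * apply Hinc. apply Nat.eqb_neq in Q2. lia.
    + intros j Hj. destruct (Nat.eqb j (S k')) eqn:Q1; [apply Nat.eqb_eq in Q1; lia|].
      destruct (Nat.eqb (S j) (S k')) eqn:Q2.
      * apply Nat.eqb_eq in Q2. assert (j = k') by lia. subst j. rewrite Hk'.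
        replace (Bool.eqb d (Nat.even k')) with e; auto.
        destruct k' as [|k'']; [lia|]. simpl pred in Ee.
        rewrite Nat.even_succ, <- Nat.negb_even.
        destruct e, d, (Nat.even k''); simpl in *; auto; discriminate.
      * apply Hdir. apply Nat.eqb_neq in Q2. lia.
Qed.

Section Main.
Variables X Y : R -> R.
Hypothesis HXc : cont01 X.
Hypothesis HYc : cont01 Y.
Hypothesis HX01 : forall t, in01 t -> in01 (X t).
Hypothesis HY01 : forall t, in01 t -> in01 (Y t).
Hypothesis X0 : X 0 = 0.
Hypothesis Y0 : Y 0 = 0.
Hypothesis X1 : X 1 = 1.
Hypothesis Y1 : Y 1 = 1.
Variable k : nat.
Variable xs : nat -> R.
Hypothesis Hpart : altpart Y 0 1 k xs true.

Lemma xs_mono : forall i j, (j + i <= k)%nat -> xs j <= xs (j + i).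
Proof.
  destruct Hpart as [_ [_ [_ [Hinc _]]]].
  induction i; intros j H. - rewrite Nat.add_0_r; lra.
  - specialize (IHi j ltac:(lia)). pose proof (Hinc (j + i)%nat ltac:(lia)).
    rewrite Nat.add_succ_r. lra.
Qed.

Lemma xs_bounds : forall j, (j <= k)%nat -> 0 <= xs j /\ xs j <= 1.
Proof.
  intros j Hj. destruct Hpart as [_ [H0 [Hk _]]].
  pose proof (xs_mono j 0 ltac:(lia)). pose proof (xs_mono (k - j) j ltac:(lia)).
  replace (j + (k - j))%nat with k in * by lia. simpl in *. lra.
Qed.

Lemma piece_lt : forall j, (j < k)%nat -> xs j < xs (S j).
Proof. destruct Hpart as [_ [_ [_ [Hinc _]]]]; auto. Qed.

Lemma piece_dir : forall j, (j < k)%nat ->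
  (Nat.even j = true -> strict_incr_on Y (xs j) (xs (S j))) /\
  (Nat.even j = false -> strict_decr_on Y (xs j) (xs (S j))).
Proof.
  intros j Hj. destruct Hpart as [_ [_ [_ [_ Hd]]]]. specialize (Hd j Hj).
  unfold dirp in Hd. destruct (Nat.even j); simpl in Hd; split; intros; auto; discriminate.
Qed.

Lemma piece_in01 : forall j t, (j < k)%nat -> xs j <= t <= xs (S j) -> in01 t.
Proof.
  intros j t Hj Ht. pose proof (xs_bounds j ltac:(lia)). pose proof (xs_bounds (S j) ltac:(lia)).
  unfold in01; lra.
Qed.

Lemma piece_min : forall j (Q : R -> Prop), (j < k)%nat ->
  ((exists t, xs j <= t <= xs (S j) /\ Y t = 0 /\ Q t) <->
   (if Nat.even j then (Y (xs j) = 0 /\ Q (xs j)) else (Y (xs (S j)) = 0 /\ Q (xs (S j))))).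
Proof.
  intros j Q Hj. pose proof (piece_dir j Hj) as [Hi Hd]. pose proof (piece_lt j Hj).
  destruct (Nat.even j) eqn:E.
  - specialize (Hi eq_refl). split.
    + intros [t [Ht [Yt Qt]]]. destruct (Req_dec t (xs j)) as [->|N]; auto.
      pose proof (Hi (xs j) t ltac:(lra) ltac:(lra) ltac:(lra)).
      pose proof (HY01 (xs j) (piece_in01 j (xs j) Hj ltac:(lra))). unfold in01 in *. lra.
    + intros [A1 A2]. exists (xs j). repeat split; auto; lra.
  - specialize (Hd eq_refl). split.
    + intros [t [Ht [Yt Qt]]]. destruct (Req_dec t (xs (S j))) as [->|N]; auto.
      pose proof (Hd t (xs (S j)) ltac:(lra) ltac:(lra) ltac:(lra)).
      pose proof (HY01 (xs (S j)) (piece_in01 j (xs (S j)) Hj ltac:(lra))). unfold in01 in *. lra.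
    + intros [A1 A2]. exists (xs (S j)). repeat split; auto; lra.
Qed.

Lemma piece_max : forall j (Q : R -> Prop) v, (j < k)%nat -> 1 <= v ->
  ((exists t, xs j <= t <= xs (S j) /\ Y t = v /\ Q t) <->
   (if Nat.even j then (Y (xs (S j)) = v /\ Q (xs (S j))) else (Y (xs j) = v /\ Q (xs j)))).
Proof.
  intros j Q v Hj Hv. pose proof (piece_dir j Hj) as [Hi Hd]. pose proof (piece_lt j Hj).
  destruct (Nat.even j) eqn:E.
  - specialize (Hi eq_refl). split.
    + intros [t [Ht [Yt Qt]]]. destruct (Req_dec t (xs (S j))) as [->|N]; auto.
      pose proof (Hi t (xs (S j)) ltac:(lra) ltac:(lra) ltac:(lra)).
      pose proof (HY01 (xs (S j)) (piece_in01 j (xs (S j)) Hj ltac:(lra))). unfold in01 in *. lra.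
    + intros [A1 A2]. exists (xs (S j)). repeat split; auto; lra.
  - specialize (Hd eq_refl). split.
    + intros [t [Ht [Yt Qt]]]. destruct (Req_dec t (xs j)) as [->|N]; auto.
      pose proof (Hd (xs j) t ltac:(lra) ltac:(lra) ltac:(lra)).
      pose proof (HY01 (xs j) (piece_in01 j (xs j) Hj ltac:(lra))). unfold in01 in *. lra.
    + intros [A1 A2]. exists (xs j). repeat split; auto; lra.
Qed.


Definition V (p : R * R) : R := X (snd p) + fst p.
Definition near (d : R) (p q : R * R) : Prop :=
  Rabs (fst q - fst p) < d /\ Rabs (snd q - snd p) < d.
Definition clopen_in (K C : R * R -> Prop) : Prop :=
  (forall p, C p -> K p) /\
  forall p, K p -> exists d, 0 < d /\ forall q, K q -> near d p q -> (C q <-> C p).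
Definition Good (K : R * R -> Prop) : Prop :=
  forall C, clopen_in K C -> C (0, 0) -> exists p, C p /\ 1 <= V p.
Definition Inv (K : R * R -> Prop) : Prop :=
  (forall p, K p -> 0 <= fst p <= 1 /\ in01 (snd p)) /\ K (0, 0).
Definition next (K : R * R -> Prop) (q : R * R) : Prop :=
  exists s, K (fst q, s) /\ in01 (snd q) /\ Y (snd q) = X s + fst q.

Lemma V_cont : forall p, in01 (snd p) -> forall e, 0 < e -> exists d, 0 < d /\
  forall q, in01 (snd q) -> near d p q -> Rabs (V q - V p) < e.
Proof.
  intros [c s] Hs e He. simpl in Hs.
  destruct (HXc s Hs (e/2) ltac:(lra)) as [d [Hd Hf]].
  exists (Rmin d (e/2)). split; [apply Rmin_glb_lt; lra|].
  intros [c' s'] Hs' [N1 N2]. simpl in *. unfold V; simpl.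
  pose proof (Rmin_l d (e/2)). pose proof (Rmin_r d (e/2)).
  specialize (Hf s' Hs' ltac:(lra)).
  replace (X s' + c' - (X s + c)) with ((X s' - X s) + (c' - c)) by ring.
  eapply Rle_lt_trans; [apply Rabs_triang|]. lra.
Qed.

Lemma Inv_next K : Inv K -> Inv (next K).
Proof.
  intros [Hb H0]. split.
  - intros [c t] [s [Hs [Ht _]]]. simpl in *. split; auto. apply (Hb _ Hs).
  - exists 0. simpl. repeat split; auto; unfold in01; try lra.
Qed.


Definition bj (C : R * R -> Prop) j c v : Prop :=
  exists t, xs j <= t <= xs (S j) /\ Y t = v /\ C (c, t).
Definition Ev (C : R * R -> Prop) (p : R * R) v' i : Prop :=
  Y (xs i) = V p /\ C (fst p, xs i) /\ (if Nat.even i then v' < V p else V p < v').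
Definition Nf C c v := altsum (fun j => ind (bj C j c v)) k.

Lemma per_piece K C (HC : clopen_in (next K) C) p (Hp : K p) j (Hj : (j < k)%nat) :
  exists d, 0 < d /\ forall c' v', (exists s', K (c', s') /\ X s' + c' = v') ->
    Rabs (c' - fst p) < d -> Rabs (v' - V p) < d ->
    ind (bj C j (fst p) (V p)) - ind (bj C j c' v') = ind (Ev C p v' j) + ind (Ev C p v' (S j)).
Proof.
  destruct p as [c s]. simpl.
  pose proof (piece_lt j Hj) as Hlt. pose proof (piece_dir j Hj) as [Hi Hd].
  pose proof (xs_bounds j ltac:(lia)). pose proof (xs_bounds (S j) ltac:(lia)).
  assert (LS : forall t0, xs j <= t0 <= xs (S j) -> Y t0 = V (c, s) -> exists e, 0 < e /\
    forall c' v' t', (exists s', K (c', s') /\ X s' + c' = v') -> Rabs (c' - c) < e ->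
      Rabs (t' - t0) < e -> xs j <= t' <= xs (S j) -> Y t' = v' -> (C (c', t') <-> C (c, t0))).
  { intros t0 Ht0 Yt0.
    destruct HC as [_ HC]. destruct (HC (c, t0)) as [d0 [Hd0 HH0]].
    { exists s. simpl. split; [auto|split; [apply (piece_in01 j); auto|]]. rewrite Yt0; unfold V; simpl; ring. }
    exists d0. split; auto. intros c' v' t' [s' [Ks' Es']] Hc Ht Ht' Yt'.
    apply HH0. - exists s'. simpl. split; [auto|split; [apply (piece_in01 j); auto|lra]].
    - split; simpl; auto. }
  destruct (Nat.even j) eqn:E.
  - destruct (core Y (xs j) (xs (S j)) Hlt (Hi eq_refl)) with
      (P := fun c t => C (c, t)) (Adm := fun c' v' => exists s', K (c', s') /\ X s' + c' = v')
      (c := c) (v := V (c, s)) as [d [Hd0 HH]].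
    + intros w Hw. apply IVT_on; auto; lra.
    + exact LS.
    + exists d; split; auto. intros c' v' Ha Hc Hv. unfold bj. rewrite (HH c' v' Ha Hc Hv).
      unfold Ev. cbn [fst snd]. rewrite Nat.even_succ, <- Nat.negb_even, E. simpl. reflexivity.
  - destruct (core_decr Y (xs j) (xs (S j)) Hlt (Hd eq_refl)) with
      (P := fun c t => C (c, t)) (Adm := fun c' v' => exists s', K (c', s') /\ X s' + c' = v')
      (c := c) (v := V (c, s)) as [d [Hd0 HH]].
    + intros w Hw. destruct (IVT_on (fun t => - Y t) (cont01_opp Y HYc) (xs j) (xs (S j)))
        with (v := - w) as [t [Ht Yt]]; try lra.
      exists t; split; auto; lra.
    + exact LS.
    + exists d; split; auto. intros c' v' Ha Hc Hv. unfold bj. rewrite (HH c' v' Ha Hc Hv).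
      unfold Ev. cbn [fst snd]. rewrite Nat.even_succ, <- Nat.negb_even, E. simpl. reflexivity.
Qed.


Lemma V_nonneg K : Inv K -> forall q, K q -> 0 <= V q.
Proof.
  intros [Hb _] [c s] Hq. destruct (Hb _ Hq) as [Hc Hs]. simpl in *.
  pose proof (HX01 s Hs). unfold V, in01 in *; simpl; lra.
Qed.

Lemma loc_const K C (HInv : Inv K) (HC : clopen_in (next K) C)
  (Hno1 : forall c, 0 <= c -> ~ C (c, 1)) p (Hp : K p) :
  exists d, 0 < d /\ forall q, K q -> near d p q -> Nf C (fst q) (V q) = Nf C (fst p) (V p).
Proof.
  assert (Hall : forall k0, (k0 <= k)%nat -> exists d, 0 < d /\ forall c' v',
    (exists s', K (c', s') /\ X s' + c' = v') ->
    Rabs (c' - fst p) < d -> Rabs (v' - V p) < d -> forall j, (j < k0)%nat ->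
    ind (bj C j (fst p) (V p)) - ind (bj C j c' v') = ind (Ev C p v' j) + ind (Ev C p v' (S j))).
  { induction k0; intros Hk0.
    - exists 1. split; [lra|]. intros; lia.
    - destruct (IHk0 ltac:(lia)) as [d1 [Hd1 H1]].
      destruct (per_piece K C HC p Hp k0 ltac:(lia)) as [d2 [Hd2 H2]].
      exists (Rmin d1 d2). split; [apply Rmin_glb_lt; auto|].
      intros c' v' Ha Hc Hv j Hj. pose proof (Rmin_l d1 d2). pose proof (Rmin_r d1 d2).
      destruct (Nat.eq_dec j k0) as [->|Nj].
      + apply H2; auto; lra.
      + apply H1; auto; try lra; lia. }
  destruct (Hall k (le_n k)) as [d [Hd Hd']].
  destruct HInv as [Hb HK0].
  destruct (V_cont p (proj2 (Hb p Hp)) d Hd) as [dV [HdV HV]].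
  exists (Rmin d dV). split; [apply Rmin_glb_lt; auto|].
  intros [c' s'] Hq Hn. pose proof (Rmin_l d dV). pose proof (Rmin_r d dV).
  destruct Hn as [N1 N2].
  assert (Hnear : near dV p (c', s')) by (split; lra).
  specialize (HV (c', s') (proj2 (Hb _ Hq)) Hnear).
  assert (Eq : Nf C (fst p) (V p) - Nf C (fst (c', s')) (V (c', s')) = 0).
  { unfold Nf. rewrite altsum_minus.
    rewrite (altsum_ext _ (fun j => ind (Ev C p (V (c', s')) j) + ind (Ev C p (V (c', s')) (S j)))).
    - rewrite altsum_tele.
      rewrite (ind_false (Ev C p (V (c', s')) 0)).
      + rewrite (ind_false (Ev C p (V (c', s')) k)). { ring. }
        intros [_ [HC1 _]]. destruct Hpart as [_ [_ [Hk _]]]. rewrite Hk in HC1.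
        apply (Hno1 (fst p)); auto. apply (Hb p Hp).
      + intros [HY0 [_ Hlt]]. simpl in Hlt. destruct Hpart as [_ [H00 _]].
        rewrite H00, Y0 in HY0.
        pose proof (V_nonneg K (conj Hb HK0) _ Hq). lra.
    - intros j Hj. apply Hd'; [| | |exact Hj].
      + exists s'. split; auto.
      + simpl in N1 |- *. lra.
      + lra. }
  lra.
Qed.


Lemma even_S_neg j : Nat.even (S j) = negb (Nat.even j).
Proof. rewrite Nat.even_succ, <- Nat.negb_even. reflexivity. Qed.

Lemma step K (HInv : Inv K) (HG : Good K) : Good (next K).
Proof.
  intros C HC HC0. apply NNPP; intros Hno.
  destruct HInv as [Hb HK0].
  assert (Hno1 : forall c, 0 <= c -> ~ C (c, 1)).
  { intros c Hc H1. apply Hno. exists (c, 1). split; auto. unfold V; simpl. rewrite X1; lra. }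
  pose (D := fun p => K p /\ Nf C (fst p) (V p) = 1).
  assert (HD : clopen_in K D).
  { split. - intros p [Kp _]; auto.
    - intros p Kp. destruct (loc_const K C (conj Hb HK0) HC Hno1 p Kp) as [d [Hd Hq]].
      exists d. split; auto. intros q Kq Hn. unfold D. rewrite (Hq q Kq Hn). tauto. }
  assert (HD0 : D (0, 0)).
  { split; auto. unfold V; simpl. rewrite X0, Rplus_0_r.
    unfold Nf. rewrite (altsum_ext _ (fun j =>
       ind (Y (xs j) = 0 /\ C (0, xs j) /\ Nat.even j = true) +
       ind (Y (xs (S j)) = 0 /\ C (0, xs (S j)) /\ Nat.even (S j) = true))).
    - rewrite altsum_tele. destruct Hpart as [_ [H00 [Hk _]]].
      rewrite (ind_true (Y (xs 0) = 0 /\ _ /\ _)).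
      + rewrite (ind_false (Y (xs k) = 0 /\ _)). { ring. }
        rewrite Hk, Y1. intros [? _]; lra.
      + rewrite H00, Y0. auto.
    - intros j Hj. unfold bj. rewrite (ind_iff _ _ (piece_min j (fun t => C (0, t)) Hj)).
      rewrite even_S_neg. destruct (Nat.even j); simpl.
      + rewrite (ind_false (_ /\ _ /\ false = true)) by (intros [_ [_ ?]]; discriminate).
        rewrite Rplus_0_r. apply ind_iff. tauto.
      + rewrite (ind_false (_ /\ _ /\ false = true)) by (intros [_ [_ ?]]; discriminate).
        rewrite Rplus_0_l. apply ind_iff. tauto. }
  destruct (HG D HD HD0) as [p [[Kp Np] Vp]].
  assert (N0 : Nf C (fst p) (V p) = 0).
  { unfold Nf. rewrite (altsum_ext _ (fun j =>
       ind (Y (xs j) = V p /\ C (fst p, xs j) /\ Nat.even j = false) +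
       ind (Y (xs (S j)) = V p /\ C (fst p, xs (S j)) /\ Nat.even (S j) = false))).
    - rewrite altsum_tele. destruct Hpart as [_ [H00 [Hk _]]].
      rewrite (ind_false (Y (xs 0) = _ /\ _ /\ _)) by (intros [_ [_ ?]]; discriminate).
      rewrite (ind_false (Y (xs k) = _ /\ _)). { ring. }
      rewrite Hk. intros [_ [HC1 _]]. apply (Hno1 (fst p)); auto. apply (Hb p Kp).
    - intros j Hj. unfold bj. rewrite (ind_iff _ _ (piece_max j (fun t => C (fst p, t)) (V p) Hj Vp)).
      rewrite even_S_neg. destruct (Nat.even j); simpl.
      + rewrite (ind_false (_ /\ _ /\ true = false)) by (intros [_ [_ ?]]; discriminate).
        rewrite Rplus_0_l. apply ind_iff. tauto.
      + rewrite (ind_false (_ /\ _ /\ true = false)) by (intros [_ [_ ?]]; discriminate).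
        rewrite Rplus_0_r. apply ind_iff. tauto. }
  lra.
Qed.


Definition K0 (p : R * R) : Prop := 0 <= fst p <= 1 /\ snd p = 0.

Lemma base_good : Good K0.
Proof.
  intros C [Hsub Hloc] HC0.
  pose (E := fun c => 0 <= c <= 1 /\ forall c', 0 <= c' <= c -> C (c', 0)).
  assert (HE0 : E 0).
  { split; [lra|]. intros c' Hc'. replace c' with 0 by lra. auto. }
  destruct (completeness E) as [m [Hub Hlub]].
  { exists 1. intros c [Hc _]. lra. }
  { exists 0; auto. }
  assert (Hm0 : 0 <= m) by (apply Hub; auto).
  assert (Hm1 : m <= 1) by (apply Hlub; intros c [Hc _]; lra).
  destruct (Hloc (m, 0)) as [d [Hd Hn]]. { split; simpl; auto. }
  assert (Hc : exists c, E c /\ m - d < c).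
  { apply NNPP; intros N. assert (m <= m - d); [|lra].
    apply Hlub. intros c Ec. destruct (Rle_or_lt c (m - d)); auto. exfalso; apply N; exists c; auto. }
  destruct Hc as [c [[Hc01 Hcall] Hcm]].
  assert (Hcle : c <= m) by (apply Hub; split; auto).
  assert (Cm : C (m, 0)).
  { apply (Hn (c, 0)). - split; simpl; auto; lra.
    - split; simpl; unfold Rabs; destruct Rcase_abs; lra.
    - apply Hcall; lra. }
  assert (Near : forall c', 0 <= c' <= 1 -> Rabs (c' - m) < d -> C (c', 0)).
  { intros c' Hc' Hcd. apply (Hn (c', 0)); auto.
    - split; simpl; auto. - split; simpl; auto. rewrite Rminus_0_r, Rabs_R0; auto. }
  assert (Em : forall c', 0 <= c' <= m -> C (c', 0)).
  { intros c' Hc'. destruct (Rle_or_lt c' c). { apply Hcall; lra. }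
    apply Near; [lra|]. unfold Rabs; destruct Rcase_abs; lra. }
  destruct (Rlt_or_le m 1) as [Hlt|Hge].
  - exfalso. set (c2 := m + Rmin (d/2) (1 - m)).
    assert (Hc2 : m < c2 /\ c2 <= 1 /\ c2 <= m + d/2).
    { unfold c2. pose proof (Rmin_l (d/2) (1-m)). pose proof (Rmin_r (d/2) (1-m)).
      assert (0 < Rmin (d/2) (1-m)) by (apply Rmin_glb_lt; lra). lra. }
    assert (E c2).
    { split; [lra|]. intros c' Hc'. destruct (Rle_or_lt c' m). { apply Em; lra. }
      apply Near; [lra|]. unfold Rabs; destruct Rcase_abs; lra. }
    pose proof (Hub c2 H). lra.
  - exists (1, 0). split. + apply Em; lra. + unfold V; simpl. rewrite X0; lra.
Qed.

Fixpoint Kn (m : nat) : R * R -> Prop :=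
  match m with O => K0 | S m' => next (Kn m') end.

Lemma Kn_inv : forall m, Inv (Kn m).
Proof.
  induction m.
  - split. + intros p [H1 H2]. split; auto. rewrite H2; unfold in01; lra.
    + split; simpl; auto; lra.
  - simpl. apply Inv_next; auto.
Qed.

Lemma Kn_good : forall m, Good (Kn m).
Proof. induction m. - apply base_good. - simpl. apply step; auto. apply Kn_inv. Qed.

Lemma final_point : forall m, exists p, Kn m p /\ V p = 1.
Proof.
  intros m. apply NNPP; intros N.
  destruct (Kn_inv m) as [Hb HK0].
  pose (C := fun p => Kn m p /\ V p < 1).
  assert (HC : clopen_in (Kn m) C).
  { split. - intros p [? _]; auto.
    - intros p Kp. assert (Hne : V p <> 1) by (intros E; apply N; exists p; auto).
      destruct (V_cont p (proj2 (Hb p Kp)) (Rabs (V p - 1))) as [d [Hd Hq]].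
      { apply Rabs_pos_lt; lra. }
      exists d. split; auto. intros q Kq Hn. specialize (Hq q (proj2 (Hb q Kq)) Hn).
      unfold C. revert Hq. unfold Rabs; repeat destruct Rcase_abs; intros; split; intros [? ?]; split; auto; lra. }
  destruct (Kn_good m C HC) as [p [[_ Hp] Hp']].
  - split; auto. unfold V; simpl. rewrite X0; lra.
  - lra.
Qed.

Lemma Kn_chain : forall m c s, Kn m (c, s) -> 0 <= c <= 1 /\ exists T : nat -> R,
  T O = 0 /\ T m = s /\ forall i, (i < m)%nat -> in01 (T (S i)) /\ Y (T (S i)) = X (T i) + c.
Proof.
  induction m; intros c s H.
  - destruct H as [H1 H2]. simpl in *. split; auto. exists (fun _ => 0). split; [reflexivity|split; [lra|]].
    intros; lia.
  - destruct H as [s0 [H1 [H2 H3]]]. simpl in *. destruct (IHm c s0 H1) as [Hc [T [T0 [Tm HT]]]].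
    split; auto. exists (fun i => if Nat.eqb i (S m) then s else T i).
    split; [simpl; auto|]. split; [rewrite Nat.eqb_refl; auto|].
    intros i Hi. destruct (Nat.eqb (S i) (S m)) eqn:Q.
    + apply Nat.eqb_eq in Q. injection Q as ->.
      destruct (Nat.eqb m (S m)) eqn:Q2; [apply Nat.eqb_eq in Q2; lia|]. rewrite Tm; auto.
    + apply Nat.eqb_neq in Q. destruct (Nat.eqb i (S m)) eqn:Q2; [apply Nat.eqb_eq in Q2; lia|].
      apply (HT i). lia.
Qed.


Lemma main_exists : forall n, exists (T : nat -> R) c, T O = 0 /\
  (forall i, (i < S n)%nat -> in01 (T (S i)) /\ Y (T (S i)) = X (T i) + c) /\
  X (T (S n)) + c = 1.
Proof.
  intros n. destruct (final_point (S n)) as [[c s] [Hp HV]].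
  destruct (Kn_chain (S n) c s Hp) as [_ [T [T0 [Tm HT]]]].
  exists T, c. repeat split; auto; try (apply HT; auto).
  unfold V in HV; simpl in HV. rewrite Tm; auto.
Qed.

End Main.

Lemma altpart_bounds f a b k xs d : altpart f a b k xs d -> forall j, (j <= k)%nat -> a <= xs j <= b.
Proof.
  intros [_ [H0 [Hk [Hinc _]]]].
  assert (M : forall i j, (j + i <= k)%nat -> xs j <= xs (j + i)%nat).
  { induction i; intros j H. - rewrite Nat.add_0_r; lra.
    - specialize (IHi j ltac:(lia)). pose proof (Hinc (j + i)%nat ltac:(lia)).
      rewrite Nat.add_succ_r. lra. }
  intros j Hj. pose proof (M j 0%nat ltac:(lia)). pose proof (M (k - j)%nat j ltac:(lia)).
  replace (j + (k - j))%nat with k in * by lia. simpl in *. subst. lra.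
Qed.

Lemma curve_cases g (Hg : curve01 g) (g0 : g 0 = (0,0)) (g1 : g 1 = (1,1))
  (HD : forall t, 0 < t < 1 -> DeltaSet (g t)) P : on_curve g P ->
  P = (0,0) \/ P = (1,1) \/ (DeltaSet P /\ in01 (pi1 P) /\ in01 (pi2 P)).
Proof.
  intros [t [Ht <-]]. destruct (Req_dec t 0) as [->|N0]; auto.
  destruct (Req_dec t 1) as [->|N1]; auto. right; right.
  destruct Hg as [_ [_ Hb]]. split; [apply HD; unfold in01 in Ht; lra| apply Hb; auto].
Qed.

Lemma distinct g n A (Hg : curve01 g) (g0 : g 0 = (0,0)) (g1 : g 1 = (1,1))
  (HD : forall t, 0 < t < 1 -> DeltaSet (g t)) : good_points g n A ->
  forall i j, (i <= S (S n))%nat -> (j <= S (S n))%nat -> i <> j -> A i <> A j.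
Proof.
  intros [A0 [An [Hon Heq]]].
  set (c := pi2 (A 1%nat)).
  assert (Hrec : forall i, (i <= S n)%nat -> pi2 (A (S i)) = pi1 (A i) + c).
  { induction i; intros Hi.
    - rewrite A0. unfold c; simpl; ring.
    - pose proof (Heq (S i) Hi) as E. simpl in E. rewrite IHi in E by lia. lra. }
  pose proof (curve_cases g Hg g0 g1 HD) as CC.
  assert (Hc0 : 0 <= c).
  { destruct (CC (A 1%nat) (Hon 1%nat ltac:(lia))) as [E|[E|[_ [_ E]]]]; unfold c;
    try rewrite E; simpl; try lra. unfold in01 in E; lra. }
  assert (Hcpos : 0 < c).
  { destruct (Rle_or_lt c 0) as [Hc|]; auto. exfalso.
    assert (Z : forall i, (1 <= i <= S n)%nat -> A i = (0,0)).
    { induction i; intros Hi; [lia|].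
      assert (Y0 : pi2 (A (S i)) = 0).
      { destruct (Nat.eq_dec i 0) as [->|Ni]. - unfold c in *; lra.
        - rewrite Hrec by lia. rewrite IHi by lia. simpl; lra. }
      destruct (CC (A (S i)) (Hon (S i) Hi)) as [E|[E|[[_ [? _]] _]]]; auto.
      - rewrite E in Y0; simpl in Y0; lra.
      - lra. }
    pose proof (Hrec (S n) (le_n _)). rewrite An, Z in H by lia. simpl in H. lra. }
  assert (Y1 : forall i, (i <= S (S n))%nat -> pi2 (A i) <= 1).
  { intros i Hi. destruct (Nat.eq_dec i (S (S n))) as [->|Ni]. { rewrite An; simpl; lra. }
    destruct (Nat.eq_dec i 0) as [->|N0]. { rewrite A0; simpl; lra. }
    destruct (CC (A i) (Hon i ltac:(lia))) as [E|[E|[_ [_ E]]]]; try rewrite E; simpl; try lra.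
    unfold in01 in E; lra. }
  assert (Inc : forall i, (i <= S n)%nat -> 0 <= pi2 (A i) < pi2 (A (S i))).
  { induction i; intros Hi.
    - rewrite A0. simpl. pose proof (Hrec 0%nat ltac:(lia)). rewrite A0 in H. simpl in H. lra.
    - specialize (IHi ltac:(lia)). rewrite (Hrec (S i) Hi).
      destruct (CC (A (S i)) (Hon (S i) ltac:(lia))) as [E|[E|[[_ [_ Hgt]] _]]].
      + rewrite E in *; simpl in *; lra.
      + rewrite E in *. simpl. pose proof (Y1 (S (S i)) ltac:(lia)). rewrite Hrec in H by lia.
        rewrite E in H; simpl in H; lra.
      + lra. }
  assert (Mono : forall i j, (i < j)%nat -> (j <= S (S n))%nat -> pi2 (A i) < pi2 (A j)).
  { intros i j; induction j; intros Hij Hj; [lia|].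
    destruct (Nat.eq_dec i j) as [->|N].
    - apply Inc; lia.
    - pose proof (IHj ltac:(lia) ltac:(lia)). pose proof (Inc j ltac:(lia)). lra. }
  intros i j Hi Hj Nij E.
  destruct (Nat.lt_total i j) as [L|[L|L]]; [|contradiction|].
  - pose proof (Mono i j L Hj). rewrite E in H; lra.
  - pose proof (Mono j i L Hi). rewrite E in H; lra.
Qed.

Theorem proposition2 (g : R -> R * R) :
  curve01 g -> g 0 = (0, 0) -> g 1 = (1, 1) ->
  classU (fun t => pi2 (g t)) ->
  (forall n : nat, exists A : nat -> R * R, good_points g n A) /\
  ((forall t, 0 < t < 1 -> DeltaSet (g t)) ->
   forall n : nat, exists A : nat -> R * R, good_points g n A /\
     forall i j, (i <= S (S n))%nat -> (j <= S (S n))%nat -> i <> j -> A i <> A j).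
Proof.
  intros Hg g0 g1 HU.
  assert (Part1 : forall n : nat, exists A : nat -> R * R, good_points g n A).
  { intros n.
    set (X := fun t => pi1 (g t)). set (Y := fun t => pi2 (g t)).
    destruct Hg as [HXc [HYc Hb]].
    assert (HX01 : forall t, in01 t -> in01 (X t)) by (intros; apply Hb; auto).
    assert (HY01 : forall t, in01 t -> in01 (Y t)) by (intros; apply Hb; auto).
    assert (X0 : X 0 = 0) by (unfold X; rewrite g0; reflexivity).
    assert (Y0 : Y 0 = 0) by (unfold Y; rewrite g0; reflexivity).
    assert (X1 : X 1 = 1) by (unfold X; rewrite g1; reflexivity).
    assert (Y1 : Y 1 = 1) by (unfold Y; rewrite g1; reflexivity).
    destruct HU as [[k [x [Hk [Hx0 [Hxk [Hinc Hdir]]]]]] _].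
    destruct (merge Y k x Hinc Hdir k ltac:(lia)) as [k' [xs [d Hp]]].
    rewrite Hx0, Hxk in Hp.
    assert (Hd : d = true).
    { destruct d; auto. exfalso.
      pose proof (altpart_bounds _ _ _ _ _ _ Hp 1%nat) as B1.
      destruct Hp as [Hk' [H0 [_ [Hi Hdr]]]].
      specialize (B1 ltac:(lia)). specialize (Hdr 0%nat Hk'). simpl in Hdr.
      pose proof (Hi 0%nat Hk').
      pose proof (Hdr (xs 0%nat) (xs 1%nat) ltac:(lra) ltac:(lra) ltac:(lra)).
      rewrite H0 in H1. pose proof (HY01 (xs 1%nat) ltac:(unfold in01; lra)).
      unfold in01 in H2. lra. }
    subst d.
    destruct (main_exists X Y HXc HYc HX01 HY01 X0 Y0 X1 Y1 k' xs Hp n) as [T [c [T0 [HT Hend]]]].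
    pose (A := fun i => if Nat.eqb i (S (S n)) then (1,1) else g (T i)).
    exists A.
    assert (P1 : forall i, (i <= S n)%nat -> pi1 (A i) = X (T i)).
    { intros i Hi. unfold A. destruct (Nat.eqb i (S (S n))) eqn:Q; [apply Nat.eqb_eq in Q; lia|]. reflexivity. }
    assert (P2 : forall i, (i <= S n)%nat -> pi2 (A (S i)) = X (T i) + c).
    { intros i Hi. unfold A. destruct (Nat.eqb (S i) (S (S n))) eqn:Q.
      - apply Nat.eqb_eq in Q. injection Q as ->. simpl. lra.
      - apply (HT i). apply Nat.eqb_neq in Q. lia. }
    assert (A0 : A 0%nat = (0,0)) by (unfold A; simpl; rewrite T0; auto).
    split; [|split; [|split]].
    - exact A0.
    - unfold A. rewrite Nat.eqb_refl; auto.
    - intros i Hi. unfold A. destruct (Nat.eqb i (S (S n))) eqn:Q; [apply Nat.eqb_eq in Q; lia|].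
      exists (T i). split; auto. destruct i; [lia|]. apply (HT i); lia.
    - intros i Hi. rewrite P2 by auto. destruct i as [|j].
      + unfold prev_pt. rewrite (P1 (S n)) by lia. rewrite A0. simpl.
        rewrite T0, X0. lra.
      + unfold prev_pt. rewrite (P2 j) by lia. rewrite (P1 (S j)) by lia. rewrite (P1 j) by lia. ring. }
  split; auto.
  intros HD n. destruct (Part1 n) as [A HA]. exists A. split; auto.
  apply (distinct g n A); auto.
Qed.
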